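(* Let $N\ge1$, $k\in\mathbb{Z}$, and let $\psi$ be a Dirichlet character modulo $N$ with $\psi(-1)=(-1)^k$, induced by a primitive character of conductor $N^*\mid N$. Then the number of $\Gamma_0(N)$-inequivalent cusps of $\Gamma_0(N)$ that are singular for $\psi$ equals \[ \sum_{\substack{f\mid N\\ (f,N/f)\mid \frac{N}{N^*}}}\varphi\big((f,N/f)\big). \]
   Context: For $\gamma=\begin{pmatrix}a&b\\c&d\end{pmatrix}\in\Gamma_0(N)$ write $\psi(\gamma)=\psi(d)$. For a cusp $\mathfrak{a}$ of $\Gamma_0(N)$ with stabilizer $\Gamma_{\mathfrak a}$, choose $\sigma_{\mathfrak a}\in SL_2(\mathbb{R})$ with $\sigma_{\mathfrak a}\infty=\mathfrak a$ and $\sigma_{\mathfrak a}^{-1}\Gamma_{\mathfrak a}\sigma_{\mathfrak a}=\{\pm\begin{pmatrix}1&n\\0&1\end{pmatrix}\}$, and let $\tau_{\mathfrak a}=\sigma_{\mathfrak a}\begin{pmatrix}1&1\\0&1\end{pmatrix}\sigma_{\mathfrak a}^{-1}$. The cusp $\mathfrak a$ is singular for $\psi$ if $\psi(\tau_{\mathfrak a})=1$ (this depends only on the $\Gamma_0(N)$-class of $\mathfrak a$). $\varphi$ is Euler's function. *)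

(* Defs.v *)
From HB Require Import structures.
From mathcomp Require Import all_boot all_order all_algebra all_field.
From mathcomp Require Import Rstruct.

Set Implicit Arguments. Unset Strict Implicit. Unset Printing Implicit Defensive.
Import Order.TTheory GRing.Theory Num.Theory.
Local Open Scope ring_scope.

Definition dirichlet_char (M : nat) (chi : int -> algC) : Prop :=
  [/\ forall n : int, chi (n + M%:Z) = chi n,
      forall m n : int, chi (m * n) = chi m * chi n,
      chi 1 = 1 &
      forall n : int, (chi n == 0) = ~~ coprimez n M%:Z].

(** primitive: no proper divisor d of M is an induced modulus. *)
Definition primitive_char (M : nat) (chi : int -> algC) : Prop :=
  dirichlet_char M chi /\
  forall d : nat, (d %| M)%N -> (d < M)%N ->
    exists n : int, [/\ (d%:Z %| n - 1)%Z, coprimez n M%:Z & chi n != 1].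

Definition induced_by (N : nat) (psi : int -> algC) (Nstar : nat)
  (chi : int -> algC) : Prop :=
  forall n : int, psi n = if coprimez n N%:Z then chi n else 0.

Definition i0 : 'I_2 := ord0.
Definition i1 : 'I_2 := ord_max.

Definition Gamma0 (N : nat) (g : 'M[int]_2) : Prop :=
  \det g = 1 /\ (N%:Z %| g i1 i0)%Z.

Definition psi_mx (psi : int -> algC) (g : 'M[int]_2) : algC := psi (g i1 i1).

(** Cusps: points of P^1(Q) = Q u {oo}; None stands for oo. *)
Definition cusp := option rat.

Definition act (g : 'M[int]_2) (x : cusp) : cusp :=
  let a := (g i0 i0)%:~R : rat in let b := (g i0 i1)%:~R : rat in
  let c := (g i1 i0)%:~R : rat in let d := (g i1 i1)%:~R : rat in
  match x with
  | None => if c == 0 then None else Some (a / c)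
  | Some q => if c * q + d == 0 then None else Some ((a * q + b) / (c * q + d))
  end.

Definition cusp_equiv (N : nat) (x y : cusp) : Prop :=
  exists g, Gamma0 N g /\ act g x = y.

Definition stab (N : nat) (x : cusp) (g : 'M[int]_2) : Prop :=
  Gamma0 N g /\ act g x = x.

Definition SL2R (s : 'M[Rdefinitions.R]_2) : Prop := \det s = 1.

Definition act_inf_R (s : 'M[Rdefinitions.R]_2) : option Rdefinitions.R :=
  if s i1 i0 == 0 then None else Some (s i0 i0 / s i1 i0).

Definition cuspR (x : cusp) : option Rdefinitions.R := omap (fun q : rat => ratr q) x.

Definition mxR (g : 'M[int]_2) : 'M[Rdefinitions.R]_2 := map_mx (fun z : int => z%:~R) g.

Definition mk2 (a b c d : Rdefinitions.R) : 'M[Rdefinitions.R]_2 :=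
  \matrix_(i < 2, j < 2)
     if (i : nat) == 0%N then (if (j : nat) == 0%N then a else b)
     else (if (j : nat) == 0%N then c else d).

Definition transl (n : int) : 'M[Rdefinitions.R]_2 := mk2 1 n%:~R 0 1.

Definition scaling (N : nat) (x : cusp) (s : 'M[Rdefinitions.R]_2) : Prop :=
  [/\ SL2R s, act_inf_R s = cuspR x,
      (forall g, stab N x g ->
         exists (n : int) (e : bool),
           invmx s *m mxR g *m s = (-1) ^+ e *: transl n) &
      (forall (n : int) (e : bool), exists g, stab N x g /\
           invmx s *m mxR g *m s = (-1) ^+ e *: transl n)].

Definition singular (N : nat) (psi : int -> algC) (x : cusp) : Prop :=
  exists s, scaling N x s /\
    exists g, [/\ stab N x g, mxR g = s *m transl 1 *m invmx s & psi_mx psi g = 1].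

(* Main.v *)
Require Import Defs.
From HB Require Import structures.
From mathcomp Require Import all_boot all_order all_algebra all_field.
From mathcomp Require Import Rstruct.
From mathcomp Require Import ring lra zify.
Import Order.TTheory GRing.Theory Num.Theory.
Local Open Scope ring_scope.
Set Implicit Arguments. Unset Strict Implicit.

Definition M2 {R : Type} (a b c d : R) : 'M[R]_2 :=
  \matrix_(i < 2, j < 2)
     if (i : nat) == 0%N then (if (j : nat) == 0%N then a else b)
     else (if (j : nat) == 0%N then c else d).

Section M2.
Variable R : Type.
Lemma M2_00 (a b c d : R) : M2 a b c d i0 i0 = a. Proof. by rewrite mxE. Qed.
Lemma M2_01 (a b c d : R) : M2 a b c d i0 i1 = b. Proof. by rewrite mxE. Qed.
Lemma M2_10 (a b c d : R) : M2 a b c d i1 i0 = c. Proof. by rewrite mxE. Qed.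
Lemma M2_11 (a b c d : R) : M2 a b c d i1 i1 = d. Proof. by rewrite mxE. Qed.
Lemma M2E (A : 'M[R]_2) : A = M2 (A i0 i0) (A i0 i1) (A i1 i0) (A i1 i1).
Proof.
apply/matrixP => i j; rewrite mxE.
case: i => [[|[|i]] Hi] //; case: j => [[|[|j]] Hj] //=;
  by congr (A _ _); apply: val_inj.
Qed.
Lemma M2_inj (a b c d a' b' c' d' : R) :
  M2 a b c d = M2 a' b' c' d' -> [/\ a = a', b = b', c = c' & d = d'].
Proof.
move=> E; split.
- by have := congr1 (fun A : 'M[R]_2 => A i0 i0) E; rewrite !M2_00.
- by have := congr1 (fun A : 'M[R]_2 => A i0 i1) E; rewrite !M2_01.
- by have := congr1 (fun A : 'M[R]_2 => A i1 i0) E; rewrite !M2_10.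
- by have := congr1 (fun A : 'M[R]_2 => A i1 i1) E; rewrite !M2_11.
Qed.
End M2.

Lemma mulM2 (R : pzRingType) (a b c d a' b' c' d' : R) :
  M2 a b c d *m M2 a' b' c' d' =
  M2 (a * a' + b * c') (a * b' + b * d') (c * a' + d * c') (c * b' + d * d').
Proof.
apply/matrixP => i j; rewrite !mxE big_ord_recl big_ord1 !mxE.
by case: i => [[|[|i]] Hi] //; case: j => [[|[|j]] Hj].
Qed.

Lemma detM2 (R : comPzRingType) (a b c d : R) : \det (M2 a b c d) = a * d - b * c.
Proof.
rewrite (expand_det_row _ ord0) big_ord_recl big_ord1 /cofactor !det_mx11 !mxE /=.
rewrite !expr0 !mul1r expr1 /=. by rewrite mulN1r mulrN.
Qed.

Lemma trM2 (R : pzRingType) (a b c d : R) : \tr (M2 a b c d) = a + d.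
Proof. by rewrite /mxtrace big_ord_recl big_ord1 !mxE. Qed.

Lemma scaleM2 (R : pzRingType) (k a b c d : R) : k *: M2 a b c d = M2 (k * a) (k * b) (k * c) (k * d).
Proof. by apply/matrixP => i j; rewrite !mxE; case: ifP; case: ifP. Qed.

Lemma oneM2 (R : pzRingType) : (1%:M : 'M[R]_2) = M2 1 0 0 1.
Proof. by apply/matrixP => i j; rewrite !mxE; case: i => [[|[|i]] Hi] //; case: j => [[|[|j]] Hj]. Qed.

Lemma mapM2 (R S : Type) (f : R -> S) (a b c d : R) : map_mx f (M2 a b c d) = M2 (f a) (f b) (f c) (f d).
Proof. by apply/matrixP => i j; rewrite !mxE; case: ifP; case: ifP. Qed.

Lemma mk2M2 a b c d : mk2 a b c d = M2 a b c d. Proof. by []. Qed.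

Lemma invM2 (R : comUnitRingType) (a b c d : R) : a * d - b * c = 1 ->
  invmx (M2 a b c d) = M2 d (- b) (- c) a.
Proof.
move=> H.
have E : M2 a b c d *m M2 d (- b) (- c) a = 1%:M.
  rewrite mulM2 oneM2 -H; congr M2; ring.
have [U _] := mulmx1_unit E.
by rewrite -[RHS]mul1mx -(mulVmx U) -mulmxA E mulmx1.
Qed.

Definition cusp_of (a c : int) : cusp := if c == 0 then None else Some (a%:~R / c%:~R).
Definition va (x : cusp) : int := if x is Some q then numq q else 1.
Definition vc (x : cusp) : int := if x is Some q then denq q else 0.

Lemma cusp_ofE x : cusp_of (va x) (vc x) = x.
Proof.
case: x => [q|] //=; rewrite /cusp_of denq_eq0 /=.
by rewrite divq_num_den.
Qed.

Lemma coprime_v x : coprimez (va x) (vc x).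
Proof. case: x => [q|] /=; first exact: coprime_num_den. by []. Qed.

Lemma coprimez_nz a c : coprimez a c -> a != 0 \/ c != 0.
Proof.
case: (eqVneq a 0) => [->|]; last by left.
by rewrite /coprimez gcd0z => /eqP Hc; right; apply/eqP => Hc0; rewrite Hc0 in Hc.
Qed.

Lemma act_cusp_of (g : 'M[int]_2) a c : (a != 0 \/ c != 0) ->
  act g (cusp_of a c) = cusp_of (g i0 i0 * a + g i0 i1 * c) (g i1 i0 * a + g i1 i1 * c).
Proof.
move=> Hnz; rewrite /act /cusp_of.
case: (eqVneq c 0) => [Hc|Hc].
- have Ha : a != 0 by case: Hnz => //; rewrite Hc eqxx.
  rewrite Hc !mulr0 !addr0 mulf_eq0 (negbTE Ha) orbF intr_eq0.
  case: (eqVneq (g i1 i0) 0) => // Hg.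
  congr Some; rewrite !intrM; field.
  by rewrite intr_eq0 Ha intr_eq0 Hg.
- have Hc' : (c%:~R : rat) != 0 by rewrite intr_eq0.
  set X := (_ * (_ / _) + _).
  set Y := (_ * (_ / _) + _).
  have EX : X = (g i1 i0 * a + g i1 i1 * c)%:~R / (c%:~R : rat).
    by rewrite /X intrD !intrM; field.
  have EY : Y = (g i0 i0 * a + g i0 i1 * c)%:~R / (c%:~R : rat).
    by rewrite /Y intrD !intrM; field.
  rewrite EX EY mulf_eq0 invr_eq0 (negbTE Hc') orbF intr_eq0.
  case: ifP => // H2; congr Some; field.
  by rewrite Hc' andbT -!intrM -intrD intr_eq0 H2.
Qed.

Lemma cusp_of_eq a c a' c' : (a != 0 \/ c != 0) -> (a' != 0 \/ c' != 0) ->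
  cusp_of a c = cusp_of a' c' -> a * c' = a' * c.
Proof.
rewrite /cusp_of => Hnz Hnz'.
case: (eqVneq c 0) => Hc; case: (eqVneq c' 0) => Hc' //.
- by rewrite Hc Hc' !mulr0.
- move=> [] E; apply/eqP; rewrite -subr_eq0 -(intr_eq0 rat).
  have Hc1 : (c%:~R : rat) != 0 by rewrite intr_eq0.
  have Hc2 : (c'%:~R : rat) != 0 by rewrite intr_eq0.
  have : (a%:~R / c%:~R - a'%:~R / c'%:~R : rat) * (c%:~R * c'%:~R) = 0 by rewrite E subrr mul0r.
  move/eqP; rewrite intrB !intrM; congr (_ == _); field.
  by rewrite Hc1 Hc2.
Qed.

Lemma cusp_of_opp a c : cusp_of (- a) (- c) = cusp_of a c.
Proof.
rewrite /cusp_of oppr_eq0; case: ifP => // Hc; congr Some.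
rewrite !intrN; field; by rewrite intr_eq0 Hc.
Qed.

Lemma lin2 (R : comPzRingType) (x y p q r s k1 k2 : R) : p = q -> r = s ->
  x - y = k1 * (p - q) + k2 * (r - s) -> x = y.
Proof. by move=> -> -> /eqP; rewrite !subrr !mulr0 addr0 subr_eq0 => /eqP. Qed.

Lemma lin1 (R : comPzRingType) (x y p q k1 : R) : p = q ->
  x - y = k1 * (p - q) -> x = y.
Proof. by move=> -> /eqP; rewrite !subrr !mulr0 subr_eq0 => /eqP. Qed.

Lemma prim_pm a c a' c' : coprimez a c -> coprimez a' c' -> a * c' = a' * c ->
  exists2 l : int, (l = 1 \/ l = -1) & (a' = l * a /\ c' = l * c).
Proof.
move=> Hac Hac' E.
have /coprimezP [[u v] /= Huv] := Hac.
have /coprimezP [[u' v'] /= Huv'] := Hac'.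
set l := u * a' + v * c'; set m := u' * a + v' * c.
have Ha' : a' = l * a by apply: (lin2 (k1 := - v) (k2 := - a') E Huv); rewrite /l; ring.
have Hc' : c' = l * c by apply: (lin2 (k1 := u) (k2 := - c') E Huv); rewrite /l; ring.
have Ha : a = m * a' by apply: (lin2 (k1 := v') (k2 := - a) E Huv'); rewrite /m; ring.
have Hc : c = m * c' by apply: (lin2 (k1 := - u') (k2 := - c) E Huv'); rewrite /m; ring.
have Hml : m * l = 1.
  case: (coprimez_nz Hac) => Hnz.
  - apply: (mulIf Hnz); rewrite mul1r -mulrA -Ha' -Ha //.
  - apply: (mulIf Hnz); rewrite mul1r -mulrA -Hc' -Hc //.
exists l => //.
have H : (`|m| * `|l|)%N = 1%N by rewrite -abszM Hml.
move/eqP: H; rewrite muln_eq1 => /andP[_ /eqP Hl]; lia.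
Qed.

Definition Mi (a b c e : int) : 'M[int]_2 := M2 a b c e.
Definition Miv (a b c e : int) : 'M[int]_2 := M2 e (- b) (- c) a.
Definition gst (l al a c : int) : 'M[int]_2 :=
  M2 (l - al * (a * c)) (al * (a * a)) (- (al * (c * c))) (l + al * (a * c)).

Lemma Mi_Miv a b c e : a * e - b * c = 1 -> Mi a b c e *m Miv a b c e = 1%:M.
Proof. move=> H; rewrite mulM2 oneM2 -H; congr M2; ring. Qed.
Lemma Miv_Mi a b c e : a * e - b * c = 1 -> Miv a b c e *m Mi a b c e = 1%:M.
Proof. move=> H; rewrite mulM2 oneM2 -H; congr M2; ring. Qed.

Lemma stab_form N (g : 'M[int]_2) a b c e :
  Gamma0 N g -> act g (cusp_of a c) = cusp_of a c -> coprimez a c -> a * e - b * c = 1 ->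
  exists l al, [/\ l = 1 \/ l = -1, (N%:Z %| al * (c * c))%Z & g = gst l al a c].
Proof.
move=> [Hdet HN] Hact Hac He.
have Hnz := coprimez_nz Hac.
move: Hdet HN Hact; rewrite [g]M2E.
rewrite /i0 /i1 M2_10.
set p := g _ _; set q := g _ _; set r := g _ _; set s := g _ _.
move=> Hdet HN; rewrite act_cusp_of // M2_00 M2_01 M2_10 M2_11 => Hact.
rewrite detM2 in Hdet.
have /coprimezP [[u v] /= Huv] := Hac.
have HXY : coprimez (p * a + q * c) (r * a + s * c).
  apply/coprimezP; exists (u * s - v * r, - (u * q) + v * p) => /=.
  apply: (lin2 (k1 := u * a + v * c) (k2 := 1) Hdet Huv); ring.
have Hnz' := coprimez_nz HXY.
have E := cusp_of_eq Hnz' Hnz Hact.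
have [l Hl [HX HY]] := prim_pm Hac HXY (esym E).
set X' := p * b + q * e; set Y' := r * b + s * e.
have gMi : M2 p q r s *m Mi a b c e = M2 (l * a) X' (l * c) Y'.
  by rewrite /Mi mulM2 -HX -HY.
set al := e * X' - b * Y'.
have K : Miv a b c e *m M2 p q r s *m Mi a b c e = M2 l al 0 (a * Y' - c * X').
  rewrite -mulmxA gMi /Miv mulM2; congr M2.
  - by apply: (lin1 (k1 := l) He); ring.
  - by rewrite /al; ring.
  - by ring.
  - by ring.
have Kdet : l * (a * Y' - c * X') = 1.
  have := congr1 determinant K; rewrite !det_mulmx /Miv /Mi !detM2 Hdet.
  have -> : e * a - - b * - c = 1 by rewrite -He; ring.
  have -> : a * e - b * c = 1 by [].
  by rewrite !mul1r mulr0 subr0 => <-.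
have Hb : a * Y' - c * X' = l.
  by case: Hl Kdet => ->; rewrite ?mul1r // => /eqP; rewrite mulN1r eqr_oppLR => /eqP.
rewrite Hb in K.
have Hg : M2 p q r s = Mi a b c e *m M2 l al 0 l *m Miv a b c e.
  by rewrite -K !mulmxA Mi_Miv // mul1mx -mulmxA Mi_Miv // mulmx1.
exists l, al; split => //.
- move: HN; have -> : r = (M2 p q r s) i1 i0 by rewrite M2_10.
  rewrite Hg /Mi /Miv !mulM2 M2_10.
  have -> : (c * l + e * 0) * e + (c * al + e * l) * - c = - (al * (c * c)) by ring.
  by rewrite rpredN.
- rewrite Hg /Mi /Miv /gst !mulM2; congr M2.
  + by apply: (lin1 (k1 := l) He); ring.
  + by ring.
  + by ring.
  + by apply: (lin1 (k1 := l) He); ring.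
Qed.

Lemma stab_mem N l al a c : coprimez a c -> l = 1 \/ l = -1 -> (N%:Z %| al * (c * c))%Z ->
  Gamma0 N (gst l al a c) /\ act (gst l al a c) (cusp_of a c) = cusp_of a c.
Proof.
move=> Hac Hl HN; split.
- split; rewrite /gst ?detM2 ?M2_10 ?rpredN //.
  by case: Hl => ->; ring.
- rewrite act_cusp_of; last exact: coprimez_nz.
  rewrite /gst !M2_00 !M2_01 !M2_10 !M2_11.
  have -> : (l - al * (a * c)) * a + al * (a * a) * c = l * a by ring.
  have -> : - (al * (c * c)) * a + (l + al * (a * c)) * c = l * c by ring.
  by case: Hl => ->; rewrite ?mul1r // !mulN1r cusp_of_opp.
Qed.


Definition dC N (c : int) : nat := gcdn `|c| N.
Definition gC N c : nat := gcdn (dC N c) (N %/ dC N c).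
Definition wC N c : nat := (N %/ dC N c) %/ gC N c.

Lemma coprime_split (d m n : nat) : (0 < d)%N -> gcdn (d * m) (d * n) = d -> coprime m n.
Proof. by move=> Hd; rewrite -muln_gcdr -{2}[d]muln1 => /eqP; rewrite eqn_pmul2l. Qed.

Lemma decomp N c : (0 < N)%N -> exists C1 d',
  [/\ `|c|%N = (dC N c * C1)%N, N = (dC N c * (gC N c * wC N c))%N,
      dC N c = (gC N c * d')%N, coprime C1 (gC N c * wC N c) & coprime d' (wC N c)]
  /\ [/\ (0 < dC N c)%N, (0 < gC N c)%N & (0 < wC N c)%N].
Proof.
move=> HN.
set d := dC N c; set g := gC N c; set w := wC N c.
have Hd : (0 < d)%N by rewrite /d /dC gcdn_gt0 HN orbT.
have HdN : (d %| N)%N by rewrite /d /dC dvdn_gcdr.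
have Hdc : (d %| `|c|)%N by rewrite /d /dC dvdn_gcdl.
have EN : N = (d * (N %/ d))%N by rewrite mulnC divnK.
have Ec : `|c|%N = (d * (`|c| %/ d))%N by rewrite mulnC divnK.
have HN1 : (0 < N %/ d)%N by rewrite divn_gt0 // dvdn_leq.
have Hg : (0 < g)%N by rewrite /g /gC gcdn_gt0 Hd.
have Hgd : (g %| d)%N by rewrite /g /gC -/d dvdn_gcdl.
have HgN1 : (g %| N %/ d)%N by rewrite /g /gC -/d dvdn_gcdr.
have EN1 : (N %/ d)%N = (g * w)%N by rewrite /w /wC -/d -/g mulnC divnK.
have Ed : d = (g * (d %/ g))%N by rewrite mulnC divnK.
exists (`|c| %/ d)%N, (d %/ g)%N; split; last split => //.
- split => //.
  + by rewrite -EN1.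
  + rewrite -EN1; apply: (coprime_split Hd); rewrite -Ec -EN //.
  + apply: (coprime_split Hg); rewrite -Ed -EN1 //.
- by move: HN1; rewrite EN1 muln_gt0 => /andP[].
Qed.

Lemma dvd_w N al c : (0 < N)%N ->
  (N%:Z %| al * (c * c))%Z = ((wC N c)%:Z %| al)%Z.
Proof.
move=> HN; have [C1 [d' [[Ec EN Ed Hc1 Hd'] [Hd Hg Hw]]]] := decomp c HN.
rewrite !dvdzE !abszM /= Ec.
set d := dC N c in Ec EN Ed Hd *; set g := gC N c in EN Ed Hg Hc1 *; set w := wC N c in EN Hc1 Hd' Hw *.
rewrite {1}EN Ed.
have -> : (`|al| * (g * d' * C1 * (g * d' * C1)))%N = ((g * d') * (g * (`|al| * d' * (C1 * C1))))%N by ring.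
rewrite dvdn_pmul2l; last by rewrite -Ed.
rewrite dvdn_pmul2l //.
have Hwc : coprime w (C1 * C1) by rewrite coprime_sym coprimeMl; move: Hc1; rewrite coprimeMr => /andP[_ ->].
by rewrite Gauss_dvdl // Gauss_dvdl // coprime_sym.
Qed.

Lemma chi_per M chi : dirichlet_char M chi -> forall (n k : int), chi (n + k * M%:Z) = chi n.
Proof.
move=> [Hp _ _ _] n k; elim/int_rec: k n => [|k IH|k IH] n.
- by rewrite mul0r addr0.
- by rewrite intS mulrDl mul1r addrCA addrC Hp IH.
- rewrite -(Hp (n + _)) -addrA.
  have -> : - (k.+1 : int) * M%:Z + M%:Z = - (k : int) * M%:Z.
    by rewrite -addn1 PoszD; ring.
  exact: IH.
Qed.

Lemma phi_mul Ns chi K : dirichlet_char Ns chi -> (Ns%:Z %| K * K)%Z ->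
  forall t1 t2 : int, chi (1 + K * (t1 + t2)) = chi (1 + K * t1) * chi (1 + K * t2).
Proof.
move=> Hd HK t1 t2; have [_ Hm _ _] := Hd.
rewrite -Hm; have /dvdzP [q Hq] := HK.
have -> : (1 + K * t1) * (1 + K * t2) = 1 + K * (t1 + t2) + (t1 * t2 * q) * Ns%:Z.
  by rewrite -mulrA -Hq; ring.
by rewrite chi_per.
Qed.

Lemma phi_one Ns chi K t : dirichlet_char Ns chi -> (Ns%:Z %| K * K)%Z ->
  chi (1 + K * t) = 1 -> forall m : int, chi (1 + K * (m * t)) = 1.
Proof.
move=> Hd HK H1 m; elim/int_rec: m => [|m IH|m IH].
- by rewrite mul0r mulr0 addr0; case: Hd.
- by rewrite intS mulrDl mul1r (phi_mul Hd HK) H1 IH mulr1.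
- move: IH; have -> : - (m : int) * t = - (m.+1 : int) * t + t.
    by rewrite -addn1 PoszD; ring.
  by rewrite (phi_mul Hd HK) H1 mulr1.
Qed.

Lemma CL Ns chi K U g : (0 < Ns)%N -> primitive_char Ns chi ->
  (Ns%:Z %| K * K)%Z -> (Ns%:Z %| K * g)%Z -> coprimez U g ->
  chi (1 + K * U) = 1 -> (Ns%:Z %| K)%Z.
Proof.
move=> HNs [Hd Hprim] HKK HKg HUg HU.
have Hg1 : chi (1 + K * g) = 1.
  have /dvdzP [q ->] := HKg; rewrite chi_per //; by case: Hd.
have /coprimezP [[x y] /= Hxy] := HUg.
have Hall : forall t, chi (1 + K * t) = 1.
  move=> t; have E : t = (t * x) * U + (t * y) * g by rewrite -[LHS]mulr1 -Hxy; ring.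
  by rewrite E (phi_mul Hd HKK) (phi_one Hd HKK HU) (phi_one Hd HKK Hg1) mulr1.
set D := gcdn `|K| Ns.
have HDN : (D %| Ns)%N by rewrite dvdn_gcdr.
case: (ltnP D Ns) => HD.
- have [n [Hn1 Hcop Hchi]] := Hprim D HDN HD.
  have /dvdzP [m Hm] := Hn1.
  have [u [v Huv]] := Bezoutz K Ns.
  have En : n = 1 + K * (m * u) + (m * v) * Ns%:Z.
    have -> : n = 1 + m * D%:Z by rewrite -Hm; ring.
    by rewrite /D -[(gcdn _ _)%:Z]/(gcdz K Ns) -Huv; ring.
  by move: Hchi; rewrite En chi_per ?Hall ?eqxx.
- have -> : Ns = D by apply/eqP; rewrite eqn_leq HD dvdn_leq.
  by rewrite dvdzE /= dvdn_gcdl.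
Qed.

Lemma addM2 (R : nmodType) (a b c d a' b' c' d' : R) :
  M2 a b c d + M2 a' b' c' d' = M2 (a + a') (b + b') (c + c') (d + d').
Proof. by apply/matrixP => i j; rewrite !mxE; case: ifP; case: ifP. Qed.

Notation RR := Rdefinitions.R.

Lemma mxR_gst l al a c :
  mxR (gst l al a c) = (l%:~R : RR) *: 1%:M + (al%:~R : RR) *: mxR (gst 0 1 a c).
Proof.
rewrite /mxR /gst !mapM2 oneM2 !scaleM2 addM2; congr M2;
  rewrite ?intrD ?intrN ?intrM ?intrB; ring.
Qed.

Lemma conj_lin (s S P : 'M[RR]_2) (k m : RR) : S *m s = 1%:M ->
  S *m (k *: 1%:M + m *: P) *m s = k *: 1%:M + m *: (S *m P *m s).
Proof.
by move=> H; rewrite mulmxDr mulmxDl -!scalemxAr mulmx1 -!scalemxAl H.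
Qed.

Lemma conj_tr (s S P : 'M[RR]_2) : s *m S = 1%:M -> \tr (S *m P *m s) = \tr P.
Proof. by move=> H; rewrite mxtrace_mulC mulmxA H mul1mx. Qed.

Lemma bezout_v x : exists b e, va x * e - b * vc x = 1.
Proof.
have /coprimezP [[u v] /= H] := coprime_v x.
by exists (- v), u; rewrite -H; ring.
Qed.

Lemma unit_s (s : 'M[RR]_2) : SL2R s -> s *m invmx s = 1%:M /\ invmx s *m s = 1%:M.
Proof.
move=> H; have U : s \in unitmx by rewrite unitmxE H unitr1.
by split; [apply: mulmxV | apply: mulVmx].
Qed.

Lemma sing_alpha N psi x : (0 < N)%N -> singular N psi x ->
  exists2 k : int, (k = 1 \/ k = -1) &
    psi (1 + k * (wC N (vc x))%:Z * (va x * vc x)) = 1.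
Proof.
move=> HN [s [[Hs Hinf Hst Hsur] [g [[Hg Hact] Hgs Hpsi]]]].
set a := va x in Hpsi *; set c := vc x in Hpsi *; set w := wC N c.
have [b [e He]] := bezout_v x.
have Hx : x = cusp_of a c by rewrite cusp_ofE.
have Hac : coprimez a c := coprime_v x.
rewrite Hx in Hact.
have [l [al [Hl Hal Hgst]]] := stab_form Hg Hact Hac He.
have Hw : (N%:Z %| w%:Z * (c * c))%Z by rewrite dvd_w // dvdzz.
have [Hh0g Hh0a] := stab_mem (l := 1) Hac (or_introl erefl) Hw.
have Hst0 : stab N x (gst 1 w a c) by split; rewrite // Hx.
have [n [ee Hn]] := Hst (gst 1 w a c) Hst0.
set S := invmx s in Hn Hgs.
have [HsS HSs] := unit_s Hs.
set P := mxR (gst 0 1 a c).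
have HT : S *m mxR g *m s = transl 1.
  by rewrite Hgs !mulmxA HSs mul1mx -mulmxA HSs mulmx1.
rewrite Hgst mxR_gst conj_lin // in HT.
rewrite mxR_gst conj_lin // in Hn.
have Htr := conj_tr P HsS.
set Q := S *m P *m s in HT Hn Htr.
have trP : \tr P = 0 by rewrite /P /mxR /gst mapM2 trM2; rewrite !intrD !intrN !intrM; ring.
rewrite trP [Q]M2E trM2 in Htr.
move: HT Hn; rewrite [Q]M2E oneM2 !scaleM2 !addM2 => HT Hn.
have [H00 H01 H10 H11] := M2_inj HT.
have [G00 G01 G10 G11] := M2_inj Hn.
clear HT Hn.
move: H00 H11 G00 G11 H01 G01 Htr.
move: (Q i0 i0 : RR) (Q i0 i1 : RR) (Q i1 i1 : RR) => q00 q01 q11 H00 H11 G00 G11 H01 G01 Htr.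
rewrite ?mulr0 ?mulr1 ?addr0 ?add0r in H00 H11 G00 G11 H01 G01.
have Hs2 : al%:~R * q00 + al%:~R * q11 = 0 :> RR by rewrite -mulrDr Htr mulr0.
have Hw2 : w%:~R * q00 + w%:~R * q11 = 0 :> RR by rewrite -mulrDr Htr mulr0.
have Hl1 : l = 1.
  case: Hl => // Hl; exfalso; rewrite Hl in H00 H11; move: H00 H11; rewrite intrN.
  move=> H00 H11; rewrite mulr1z in H00 H11; clear -H00 H11 Hs2; lra.
have Hee : ((-1) ^+ ee : RR) = 1 by rewrite mulr1z in G00 G11; clear -G00 G11 Hw2; lra.
rewrite Hee mul1r in G01.
have Hwn : (w : int) = al * n.
  rewrite mulr1z in H01.
  have E : (w%:~R : RR) * (al%:~R * q01) = al%:~R * (w%:~R * q01) by ring.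
  rewrite H01 G01 mulr1 in E.
  by apply: (@intr_inj RR); rewrite intrM E.
have /dvdzP [k Hk] : ((w : int) %| al)%Z by rewrite -dvd_w.
have [_ [_ [_ [_ _ Hw0]]]] := decomp c HN.
have Hkn : k * n = 1.
  apply: (@mulIf _ (w : int)); first by apply/eqP; clear -Hw0; lia.
  by rewrite mul1r mulrAC -Hk -Hwn.
exists k.
  have H : (`|k| * `|n|)%N = 1%N by rewrite -abszM Hkn.
  by move/eqP: H; rewrite muln_eq1 => /andP[/eqP Hk1 _]; lia.
move: Hpsi; rewrite /psi_mx Hgst /gst M2_11 Hl1 Hk.
by rewrite mulrA.
Qed.

Lemma coprime_1KU N K U : (N%:Z %| K * K)%Z -> coprimez (1 + K * U) N%:Z.
Proof.
move=> /dvdzP [q Hq]; apply/coprimezP; exists (1 - K * U, U * U * q) => /=.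
have -> : (1 - K * U) * (1 + K * U) = 1 - (K * K) * (U * U) by ring.
by rewrite Hq; ring.
Qed.

Lemma c1s_eq N c : c = (c %/ (dC N c)%:Z)%Z * (dC N c)%:Z.
Proof. by rewrite divzK // dvdzE /= /dC dvdn_gcdl. Qed.

Lemma sing_cond N psi Ns chi x : (0 < N)%N -> (Ns %| N)%N -> primitive_char Ns chi ->
  induced_by N psi Ns chi -> singular N psi x ->
  (gC N (vc x) %| N %/ Ns)%N.
Proof.
move=> HN HNs Hprim Hind Hsing.
have [k Hk Hpsi] := sing_alpha HN Hsing.
set a := va x in Hpsi; set c := vc x in Hpsi *.
have [C1 [d' [[Ec EN Ed Hc1 Hd'] [Hd Hg Hw]]]] := decomp c HN.
set d := dC N c in Ec EN Ed Hd Hc1 *; set g := gC N c in EN Ed Hg Hc1 Hd' *;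
  set w := wC N c in EN Hc1 Hd' Hw Hpsi *.
have Hcs := c1s_eq N c; rewrite -/d in Hcs.
set c1 := (c %/ d)%Z in Hcs.
set K : int := (d * w)%N.
set U := k * (a * c1).
have E1 : 1 + k * w%:Z * (a * c) = 1 + K * U.
  by rewrite [in LHS]Hcs /K /U PoszM; ring.
rewrite E1 in Hpsi.
have HNKK : (N%:Z %| K * K)%Z.
  rewrite dvdzE /K abszM /=; apply/dvdnP; exists (d' * w)%N.
  by rewrite {1 2}Ed EN Ed; ring.
have HNsN : (Ns%:Z %| N%:Z)%Z by rewrite dvdzE.
have HNs0 : (0 < Ns)%N by apply: dvdn_gt0 HNs.
have Hcop : coprimez U g%:Z.
  rewrite /U coprimezMl coprimezMl; apply/and3P; split.
  - by case: Hk => ->; rewrite /coprimez /gcdz /= gcd1n.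
  - have Hac : coprimez a c := coprime_v x.
    move: Hac; rewrite /coprimez /gcdz /= => Hac; apply: (coprime_dvdr _ Hac).
    by rewrite Ec Ed -mulnA dvdn_mulr.
  - rewrite /coprimez /gcdz /=.
    have Hc1' : `|c1|%N = C1.
      apply/eqP; rewrite -(eqn_pmul2l Hd) -Ec Hcs abszM /= mulnC //.
    by rewrite Hc1'; move: Hc1; rewrite coprimeMr => /andP[].
have HK : (Ns%:Z %| K)%Z.
  apply: (CL (U := U) (g := g%:Z) HNs0 Hprim).
  - exact: dvdz_trans HNsN HNKK.
  - apply: (dvdz_trans HNsN); rewrite dvdzE /K /= -mulnA [(w * g)%N]mulnC EN //.
  - exact: Hcop.
  - by rewrite -Hpsi Hind coprime_1KU.
move: HK; rewrite dvdzE /K /= => /dvdnP [j Hj].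
have -> : N = (g * j * Ns)%N by rewrite EN mulnCA Hj mulnA.
by rewrite mulnK // dvdn_mulr.
Qed.


Definition shiftT (u f : nat) : nat := (\prod_(p <- primes f | ~~ (p %| u)%N) p)%N.

Lemma coprime_shift (u g f : nat) : coprime u g -> (0 < f)%N ->
  coprime (u + shiftT u f * g)%N f.
Proof.
move=> Hug Hf.
rewrite /shiftT; set t := (\prod_(p <- primes f | ~~ (p %| u)%N) p)%N.
rewrite /coprime; have [H|H] := leqP (gcdn (u + t * g)%N f) 1.
- by rewrite eqn_leq H gcdn_gt0 Hf orbT.
- have Hp := pdiv_prime H.
  set p := pdiv _ in Hp.
  have Hp1 : (p %| (u + t * g)%N)%N by apply: dvdn_trans (pdiv_dvd _) (dvdn_gcdl _ _).
  have Hp2 : (p %| f)%N by apply: dvdn_trans (pdiv_dvd _) (dvdn_gcdr _ _).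
  have Htp : (p %| t)%N = ~~ (p %| u)%N.
    rewrite /t Euclid_dvd_prod // big_has_cond.
    apply/hasP/idP.
    + move=> [q Hq /andP [Hqu Hpq]]; move: Hq; rewrite mem_primes => /and3P [Hq _ _].
      by move: Hpq; rewrite dvdn_prime2 // => /eqP ->.
    + move=> Hpu; exists p => //; first by rewrite mem_primes Hp Hf Hp2.
      by rewrite /= Hpu dvdnn.
  case Hpu : (p %| u)%N.
  + have Hpt : ~~ (p %| t)%N by rewrite Htp Hpu.
    have Hpg : ~~ (p %| g)%N.
      apply/negP => Hpg; move: Hug; rewrite /coprime => /eqP Hug.
      by move: (dvdn_gcd p u g); rewrite Hpu Hpg Hug Euclid_dvd1.
    by move: Hp1; rewrite dvdn_addr // Euclid_dvdM // (negbTE Hpt) (negbTE Hpg).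
  + have Hpt : (p %| t)%N by rewrite Htp Hpu.
    by move: Hp1; rewrite dvdn_addl ?Hpu // dvdn_mulr.
Qed.

Definition gf N f : nat := gcdn f (N %/ f).
Definition a0 N f u : nat := (u + shiftT u f * gf N f)%N.
Definition rep N f u : cusp := cusp_of (a0 N f u)%:Z f%:Z.

Definition inv N (x : cusp) : nat * nat :=
  (dC N (vc x), `|((va x * (vc x %/ (dC N (vc x))%:Z)%Z) %% (gC N (vc x))%:Z)%Z|%N).

Lemma va_vc_rep N f u : (0 < f)%N -> coprime u (gf N f) ->
  va (rep N f u) = (a0 N f u)%:Z /\ vc (rep N f u) = f%:Z.
Proof.
move=> Hf Hu.
have Hc : coprime `|(a0 N f u)%:Z| `|f%:Z| by exact: coprime_shift.
rewrite /rep /cusp_of; have -> : (f%:Z == 0) = false by apply/negbTE/eqP; lia.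
split => /=.
- by rewrite coprimeq_num // gtr0_sg ?mul1r // ltz_nat.
- by rewrite coprimeq_den //; have -> : (f%:Z == 0) = false by apply/negbTE/eqP; lia.
Qed.

Lemma inv_rep N f u : (0 < N)%N -> (f %| N)%N -> (u < gf N f)%N -> coprime u (gf N f) ->
  inv N (rep N f u) = (f, u).
Proof.
move=> HN HfN Hug Hu.
have Hf : (0 < f)%N by apply: dvdn_gt0 HN HfN.
rewrite /inv; have [-> ->] := va_vc_rep Hf Hu.
have Hd : dC N f = f by rewrite /dC /= ; apply/gcdn_idPl.
rewrite Hd /gC Hd -/(gf N f) divzz.
have -> : (f%:Z == 0) = false by apply/negbTE/eqP; lia.
congr pair.
rewrite mulr1 /a0 PoszD PoszM addrC modzMDl modz_small //.
Qed.

Lemma prim_image p q r s a c : p * s - q * r = 1 -> coprimez a c ->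
  coprimez (p * a + q * c) (r * a + s * c).
Proof.
move=> Hdet /coprimezP [[u v] /= Huv].
apply/coprimezP; exists (u * s - v * r, - (u * q) + v * p) => /=.
apply: (lin2 (k1 := u * a + v * c) (k2 := 1) Hdet Huv); ring.
Qed.

Lemma dC_gcdz N c : (dC N c)%:Z = gcdz c N%:Z.
Proof. by []. Qed.

Lemma inv_equiv N x y : (0 < N)%N -> cusp_equiv N x y -> inv N x = inv N y.
Proof.
move=> HN [G [[Hdet HN'] Hact]].
have Hac := coprime_v x; have Hac' := coprime_v y.
rewrite -(cusp_ofE x) -(cusp_ofE y) in Hact.
rewrite /inv.
set a := va x in Hac Hact *; set c := vc x in Hac Hact *.
set a' := va y in Hac' Hact *; set c' := vc y in Hac' Hact *.
move: Hdet HN' Hact; rewrite [G]M2E /i0 /i1 M2_10.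
set p := G _ _; set q := G _ _; set r := G _ _; set s := G _ _.
move=> Hdet HN'; rewrite act_cusp_of ?M2_00 ?M2_01 ?M2_10 ?M2_11; last exact: coprimez_nz.
move=> Hact; rewrite detM2 in Hdet.
have HXY := prim_image Hdet Hac.
have E := cusp_of_eq (coprimez_nz HXY) (coprimez_nz Hac') Hact.
have [l Hl [Ha' Hc']] := prim_pm HXY Hac' E.
have /dvdzP [r0 Hr] := HN'.
have Hll : l * l = 1 by case: Hl => ->.
have Hd : dC N c' = dC N c.
  have HsN : coprimez N%:Z s.
    apply/coprimezP; exists (- (q * r0), p) => /=; rewrite -Hdet Hr; ring.
  have : gcdz c' N%:Z = gcdz c N%:Z.
    rewrite Hc' Hr.
    have -> : gcdz (l * (r0 * N%:Z * a + s * c)) N%:Z = gcdz (r0 * N%:Z * a + s * c) N%:Z.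
      by rewrite /gcdz abszM; case: Hl => -> /=; rewrite mul1n.
    rewrite gcdzC (mulrC r0) -mulrA (mulrC N%:Z) gcdzMDl Gauss_gcdzr // gcdzC //.
  by rewrite -!dC_gcdz => -[].
rewrite Hd; congr pair.
set d := dC N c in Hd *.
have [C1 [d'' [[Ec EN Ed Hc1 Hd''] [Hd0 Hg0 Hw0]]]] := decomp c HN.
rewrite -/d in Ec EN Ed Hd0.
set g := gC N c in EN Ed Hc1 Hd'' Hg0 *; set w := wC N c in EN Hc1 Hd'' Hw0.
have Hcs := c1s_eq N c; rewrite -/d in Hcs; set c1 := (c %/ d)%Z in Hcs *.
have Hcs' := c1s_eq N c'; rewrite Hd -/d in Hcs'; set c1' := (c' %/ d)%Z in Hcs' *.
have EdZ : d%:Z = g%:Z * d''%:Z by rewrite Ed PoszM.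
have ENZ : N%:Z = g%:Z * d''%:Z * (g%:Z * w%:Z) by rewrite EN Ed !PoszM.
have Hd0' : d%:Z != 0 by apply/eqP; lia.
have Hc1' : c1' = l * (r0 * g%:Z * w%:Z * a + s * c1).
  apply: (mulIf Hd0'); rewrite -Hcs' Hc' Hr Hcs ENZ EdZ; ring.
have Ha'' : a' = l * (p * a + q * (c1 * (g%:Z * d''%:Z))) by rewrite Ha' Hcs EdZ.
have Hg : gC N c' = g by rewrite /gC Hd.
rewrite Hg; congr absz; apply/eqP/esym/eqP; rewrite eqz_mod_dvd; apply/dvdzP.
exists (- (p * a * a * r0 * w%:Z + q * c1 * d''%:Z * r0 * g%:Z * w%:Z * a
        + q * c1 * d''%:Z * s * c1 + a * c1 * q * r0 * d''%:Z * g%:Z * w%:Z)).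
rewrite Ha'' Hc1' mulrACA Hll mul1r.
move: Hdet; rewrite Hr ENZ => Hdet.
apply: (lin1 (k1 := - (a * c1)) Hdet); ring.
Qed.

Lemma gcdz_modz (m g : int) : gcdz g (m %% g)%Z = gcdz g m.
Proof.
have E : (m %% g)%Z = - (m %/ g)%Z * g + m by apply: (lin1 (k1 := -1) (divz_eq m g)); ring.
by rewrite E gcdzMDl.
Qed.

Lemma inv_props N x : (0 < N)%N ->
  ((inv N x).2 < gC N (vc x))%N /\ coprime (inv N x).2 (gC N (vc x)).
Proof.
move=> HN.
have [C1 [d'' [[Ec EN Ed Hc1 Hd''] [Hd0 Hg0 Hw0]]]] := decomp (vc x) HN.
set a := va x; set c := vc x in Ec EN Ed Hc1 Hd'' Hd0 Hg0 Hw0 *.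
set d := dC N c in Ec EN Ed Hd0 *; set g := gC N c in EN Ed Hc1 Hd'' Hg0 *.
have Hcs := c1s_eq N c; rewrite -/d in Hcs; set c1 := (c %/ d)%Z in Hcs *.
rewrite /inv /= -/c -/d -/g -/c1.
have Hg0' : (g%:Z != 0) by apply/eqP; lia.
have Hm0 := modz_ge0 (a * c1) Hg0'.
split.
- rewrite -ltz_nat gez0_abs // -[X in _ < X]gez0_abs ?ler0n //. exact: ltz_pmod.
- have Hac1 : coprimez (a * c1) g%:Z.
    rewrite coprimezMl; apply/andP; split.
    + have Hac : coprimez a c := coprime_v x.
      move: Hac; rewrite /coprimez /gcdz /= => Hac; apply: (coprime_dvdr _ Hac).
      by rewrite Ec Ed -mulnA dvdn_mulr.
    + rewrite /coprimez /gcdz /=.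
      have Hc1' : `|c1|%N = C1.
        apply/eqP; rewrite -(eqn_pmul2l Hd0) -Ec Hcs abszM /= mulnC //.
      by rewrite Hc1'; move: Hc1; rewrite coprimeMr => /andP[].
  have : coprimez ((a * c1) %% g%:Z)%Z g%:Z by rewrite /coprimez gcdzC gcdz_modz gcdzC.
  by rewrite /coprimez /gcdz /=.
Qed.

Lemma lin3 (R : comPzRingType) (x y p q r s t v k1 k2 k3 : R) : p = q -> r = s -> t = v ->
  x - y = k1 * (p - q) + k2 * (r - s) + k3 * (t - v) -> x = y.
Proof. by move=> -> -> -> /eqP; rewrite !subrr !mulr0 !addr0 subr_eq0 => /eqP. Qed.

Lemma to_rep N x : (0 < N)%N ->
  cusp_equiv N x (rep N (dC N (vc x)) (inv N x).2).
Proof.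
move=> HN.
have [Hlt Hcop] := inv_props x HN.
have [C1 [d'' [[Ec EN Ed Hc1 Hd''] [Hd0 Hg0 Hw0]]]] := decomp (vc x) HN.
have [b [e He]] := bezout_v x.
have Hac : coprimez (va x) (vc x) := coprime_v x.
have Hx := cusp_ofE x.
move: Hlt Hcop He Hac Hx.
set a := va x; set c := vc x in Ec EN Ed Hc1 Hd'' Hd0 Hg0 Hw0 *.
set d := dC N c in Ec EN Ed Hd0 *; set g := gC N c in EN Ed Hc1 Hd'' Hg0 *.
set w := wC N c in EN Hc1 Hd'' Hw0 *.
rewrite /inv /= -/c -/d -/g.
have Hcs := c1s_eq N c; rewrite -/d in Hcs; set c1 := (c %/ d)%Z in Hcs *.
set u := `|_|%N.
move=> Hlt Hcop He Hac Hx.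
have Hg0' : (g%:Z != 0) by apply/eqP; lia.
have Hu : u%:Z = ((a * c1) %% g%:Z)%Z by rewrite /u gez0_abs // modz_ge0.
have Hgf : gf N d = g by [].
have Hcop' : coprime u (gf N d) by rewrite Hgf.
have Ha0 := coprime_shift Hcop' Hd0.
rewrite -/(a0 N d u) in Ha0.
set A0 := a0 N d u in Ha0 *.
have /coprimezP [[e0 mb0] /= He0] : coprimez A0%:Z d%:Z by [].
set b0 := - mb0.
have He0' : A0%:Z * e0 - b0 * d%:Z = 1 by rewrite -He0 /b0; ring.
set m := e - e0 * c1.
have Hgm : (g%:Z %| m)%Z.
  have Hga : coprimez g%:Z a.
    move: Hac; rewrite /coprimez /gcdz /= => Hac'; rewrite gcdnC; apply: (coprime_dvdr _ Hac').
    by rewrite Ec Ed -mulnA dvdn_mulr.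
  rewrite -(Gauss_dvdzr _ Hga).
  have E1 := divz_eq (a * c1) g%:Z; rewrite -Hu in E1.
  set qq := ((a * c1) %/ g%:Z)%Z in E1.
  have EA0 : A0%:Z = u%:Z + (shiftT u d)%:Z * g%:Z by rewrite /A0 /a0 PoszD PoszM.
  apply/dvdzP; exists (b * c1 * d''%:Z - b0 * d''%:Z + (shiftT u d)%:Z * e0 - qq * e0).
  have EdZ : d%:Z = g%:Z * d''%:Z by rewrite Ed PoszM.
  rewrite Hcs EdZ in He.
  rewrite EdZ in He0'.
  rewrite EA0 in He0'.
  apply: (lin3 (k1 := 1) (k2 := -1) (k3 := - e0) He He0' E1); rewrite /m; ring.
have /dvdzP [m' Hm] := Hgm; rewrite /m in Hm.
have Hc1' : `|c1|%N = C1.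
  apply/eqP; rewrite -(eqn_pmul2l Hd0) -Ec Hcs abszM /= mulnC //.
have Hgcd : gcdz (c1 * d%:Z) (g%:Z * w%:Z) = g%:Z.
  rewrite /gcdz !abszM /= Hc1' Ed mulnCA -muln_gcdr.
  have -> : gcdn (C1 * d'') w = 1%N.
    have : coprime (C1 * d'') w.
      by rewrite coprimeMl Hd'' andbT; move: Hc1; rewrite coprimeMr => /andP[].
    by move/eqP.
  by rewrite muln1.
have [u' [v Huv]] := Bezoutz (c1 * d%:Z) (g%:Z * w%:Z).
rewrite Hgcd in Huv.
set k := u' * m'.
exists (M2 (A0%:Z * e - (A0%:Z * k + b0) * c) (- (A0%:Z * b) + (A0%:Z * k + b0) * a)
           (d%:Z * e - (d%:Z * k + e0) * c) (- (d%:Z * b) + (d%:Z * k + e0) * a)).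
have ENZ : N%:Z = d%:Z * (g%:Z * w%:Z) by rewrite EN !PoszM.
split; first split.
- rewrite detM2.
  apply: (lin2 (k1 := a * e - b * c) (k2 := 1) He0' He); rewrite /k; ring.
- rewrite M2_10; apply/dvdzP; exists (v * m').
  rewrite ENZ Hcs.
  apply: (lin2 (k1 := - (d%:Z * m')) (k2 := d%:Z) Huv Hm); rewrite /k; ring.
- rewrite -Hx act_cusp_of; last exact: coprimez_nz.
  rewrite !M2_00 !M2_01 !M2_10 !M2_11 /rep -/A0.
  have -> : (A0%:Z * e - (A0%:Z * k + b0) * c) * a + (- (A0%:Z * b) + (A0%:Z * k + b0) * a) * c
            = A0%:Z * (a * e - b * c) by ring.
  have -> : (d%:Z * e - (d%:Z * k + e0) * c) * a + (- (d%:Z * b) + (d%:Z * k + e0) * a) * c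
            = d%:Z * (a * e - b * c) by ring.
  by rewrite He !mulr1.
Qed.



Lemma Miv_gst_Mi a b c e l al : a * e - b * c = 1 ->
  Miv a b c e *m gst l al a c *m Mi a b c e = M2 l al 0 l.
Proof.
move=> He; rewrite /Miv /gst /Mi !mulM2; congr M2.
- by apply: (lin1 (k1 := l) He); ring.
- by apply: (lin1 (k1 := al * (a * e - b * c + 1)) He); ring.
- by ring.
- by apply: (lin1 (k1 := l) He); ring.
Qed.

Lemma Mi_T_Miv a b c e w : a * e - b * c = 1 ->
  Mi a b c e *m M2 1 w 0 1 *m Miv a b c e = gst 1 w a c.
Proof.
move=> He; rewrite /Miv /gst /Mi !mulM2; congr M2.
- by apply: (lin1 (k1 := 1) He); ring.
- by ring.
- by ring.
- by apply: (lin1 (k1 := 1) He); ring.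
Qed.

Definition sR (a b c e : int) (r : RR) : 'M[RR]_2 := mxR (Mi a b c e) *m M2 r 0 0 r^-1.

Lemma mxR_M2 (a b c d : int) : mxR (M2 a b c d) = M2 a%:~R b%:~R c%:~R d%:~R.
Proof. by rewrite /mxR mapM2. Qed.

Lemma mxR1 : mxR 1%:M = 1%:M.
Proof. by rewrite /mxR oneM2 mapM2 oneM2. Qed.

Lemma sR_inv a b c e r : a * e - b * c = 1 -> r != 0 ->
  invmx (sR a b c e r) = M2 r^-1 0 0 r *m mxR (Miv a b c e).
Proof.
move=> He Hr.
have E : sR a b c e r *m (M2 r^-1 0 0 r *m mxR (Miv a b c e)) = 1%:M.
  rewrite /sR mulmxA -[_ *m M2 r^-1 _ _ _]mulmxA mulM2.
  have -> : M2 (r * r^-1 + 0 * 0) (r * 0 + 0 * r) (0 * r^-1 + r^-1 * 0) (0 * 0 + r^-1 * r) = 1%:M.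
    by rewrite oneM2; congr M2; field.
  by rewrite mulmx1 /mxR -map_mxM Mi_Miv // -/(mxR _) mxR1.
have [U _] := mulmx1_unit E.
by rewrite -[RHS]mul1mx -(mulVmx U) -mulmxA E mulmx1.
Qed.

Lemma sR_det a b c e r : a * e - b * c = 1 -> r != 0 -> SL2R (sR a b c e r).
Proof.
move=> He Hr; rewrite /SL2R /sR det_mulmx /mxR det_map_mx /Mi detM2 He detM2.
rewrite mulr0 subr0 divff // mulr1. by [].
Qed.

Lemma sR_conj a b c e r l al : a * e - b * c = 1 -> r != 0 ->
  invmx (sR a b c e r) *m mxR (gst l al a c) *m sR a b c e r =
  M2 l%:~R (al%:~R / (r * r)) 0 l%:~R.
Proof.
move=> He Hr; rewrite sR_inv // /sR.
have -> : M2 r^-1 0 0 r *m mxR (Miv a b c e) *m mxR (gst l al a c) *m (mxR (Mi a b c e) *m M2 r 0 0 r^-1)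
  = M2 r^-1 0 0 r *m mxR (Miv a b c e *m gst l al a c *m Mi a b c e) *m M2 r 0 0 r^-1.
  by rewrite /mxR !map_mxM !mulmxA.
rewrite Miv_gst_Mi // mxR_M2 !mulM2; congr M2; rewrite ?intr0; field => //.
Qed.

Lemma sR_T a b c e r w : a * e - b * c = 1 -> r != 0 -> r * r = w%:~R ->
  sR a b c e r *m transl 1 *m invmx (sR a b c e r) = mxR (gst 1 w a c).
Proof.
move=> He Hr Hw; rewrite sR_inv // /sR -(Mi_T_Miv w He).
have -> : forall A T B : 'M[RR]_2, A *m M2 r 0 0 r^-1 *m T *m (M2 r^-1 0 0 r *m B)
  = A *m (M2 r 0 0 r^-1 *m T *m M2 r^-1 0 0 r) *m B by move=> *; rewrite !mulmxA.
have -> : M2 r 0 0 r^-1 *m transl 1 *m M2 r^-1 0 0 r = mxR (M2 1 w 0 1).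
  rewrite /transl mk2M2 mxR_M2 !mulM2 -Hw; congr M2; rewrite ?intr0 ?intr1 //; field => //.
by rewrite /mxR !map_mxM.
Qed.


Lemma translE n : transl n = M2 1 n%:~R 0 1. Proof. by []. Qed.

Lemma rep_singular N psi Ns chi f u : (0 < N)%N -> (Ns %| N)%N -> dirichlet_char Ns chi ->
  induced_by N psi Ns chi -> (f %| N)%N -> (gf N f %| N %/ Ns)%N ->
  (u < gf N f)%N -> coprime u (gf N f) -> singular N psi (rep N f u).
Proof.
move=> HN HNs Hchi Hind HfN Hgc Hug Hu.
have Hf : (0 < f)%N by apply: dvdn_gt0 HN HfN.
have HA0 := coprime_shift Hu Hf; rewrite -/(a0 N f u) in HA0.
set A0 := a0 N f u in HA0 *.
have /coprimezP [[e0 mb0] /= He0] : coprimez A0%:Z f%:Z by [].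
set b0 := - mb0.
have He : A0%:Z * e0 - b0 * f%:Z = 1 by rewrite -He0 /b0; ring.
have Hac : coprimez A0%:Z f%:Z by [].
have [C1 [d'' [[Ec EN Ed Hc1 Hd''] [Hd0 Hg0 Hw0]]]] := decomp f%:Z HN.
have HdC : dC N f%:Z = f by rewrite /dC /=; apply/gcdn_idPl.
rewrite HdC in Ec EN Ed Hd0.
have HgC : gC N f%:Z = gf N f by rewrite /gC HdC.
rewrite HgC in EN Ed Hc1 Hd'' Hg0.
set g := gf N f in EN Ed Hc1 Hd'' Hg0 Hgc Hug Hu *.
set w := wC N f%:Z in EN Hc1 Hd'' Hw0 *.
set r : RR := Num.sqrt (w%:Z%:~R).
have Hwpos : (0 : RR) <= w%:Z%:~R by rewrite ler0z.
have Hrr : r * r = w%:Z%:~R by rewrite -expr2 sqr_sqrtr.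
have Hr : r != 0.
  apply/eqP => H0; move: Hrr; rewrite H0 mulr0 => /eqP; rewrite eq_sym intr_eq0.
  by apply/negP; apply/eqP; lia.
have Hy : rep N f u = cusp_of A0%:Z f%:Z by [].
exists (sR A0 b0 f e0 r); split; first split.
- exact: sR_det.
- have Hf' : (f%:Z%:~R : RR) != 0 by rewrite intr_eq0; apply/eqP; lia.
  rewrite /act_inf_R /sR /Mi mxR_M2 mulM2 M2_10 M2_00 !mulr0 !addr0 Hy /cuspR /cusp_of.
  have -> : (f%:Z == 0) = false by apply/negbTE/eqP; lia.
  rewrite mulf_eq0 (negbTE Hf') (negbTE Hr) /=; congr Some.
  rewrite fmorph_div !rmorph_int; field.
  by rewrite Hf' Hr.
- move=> G [HG HGa]; rewrite Hy in HGa.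
  have [l [al [Hl Hal ->]]] := stab_form HG HGa Hac He.
  rewrite dvd_w // in Hal; have /dvdzP [n0 Hn0] := Hal.
  exists (l * n0), (l == -1); rewrite sR_conj // Hn0 intrM -Hrr mulfK ?mulf_neq0 // translE scaleM2.
  case: Hl => -> /=; congr M2; rewrite ?mulr0 ?mulr1 ?mul1r ?intrN ?intrM ?intr1 //.
  by rewrite expr1 mulrN1z !mulN1r opprK.
- move=> n e.
  suff H : forall sg : int, (sg = 1 \/ sg = -1) -> ((-1) ^+ e : RR) = sg%:~R ->
    exists g0, stab N (rep N f u) g0 /\
      invmx (sR A0 b0 f e0 r) *m mxR g0 *m sR A0 b0 f e0 r = (-1) ^+ e *: transl n.
    case: e H => H; [apply: (H (-1)) | apply: (H 1)]; rewrite ?expr1 ?expr0 ?mulrN1z ?intr1 //; by [right|left].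
  move=> sg Hsg Hsge.
  have Hdv : (N%:Z %| sg * n * w%:Z * (f%:Z * f%:Z))%Z by rewrite dvd_w // dvdz_mull.
  have [HG HGa] := stab_mem Hac Hsg Hdv.
  exists (gst sg (sg * n * w%:Z) A0 f); split; first by split; rewrite // Hy.
  rewrite sR_conj // intrM -Hrr mulfK ?mulf_neq0 // translE scaleM2 Hsge.
  congr M2; rewrite ?mulr0 ?mulr1 ?intrM //.
- have Hdv : (N%:Z %| w%:Z * (f%:Z * f%:Z))%Z by rewrite dvd_w // dvdzz.
  have [HG HGa] := stab_mem (l := 1) Hac (or_introl erefl) Hdv.
  exists (gst 1 w A0 f); split; first by split; rewrite // Hy.
  + by rewrite (sR_T He Hr Hrr).
  rewrite /psi_mx /gst M2_11.
  set K : int := (f * w)%N.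
  have -> : 1 + w%:Z * (A0%:Z * f%:Z) = 1 + K * A0%:Z by rewrite /K PoszM; ring.
  have HKK : (N%:Z %| K * K)%Z.
    rewrite dvdzE /K abszM /=; apply/dvdnP; exists (d'' * w)%N.
    by rewrite {1 2}Ed EN Ed; ring.
  rewrite Hind coprime_1KU //.
  have /dvdnP [m Hm] := HNs.
  have Hgm : (g %| m)%N.
    by move: Hgc; rewrite Hm mulnK // (dvdn_gt0 HN HNs).
  have /dvdnP [j Hj] := Hgm.
  have HK : K = (j * Ns)%N.
    rewrite /K; congr Posz; apply/eqP; rewrite -(eqn_pmul2l Hg0); apply/eqP.
    by rewrite mulnCA -EN Hm Hj; ring.
  rewrite HK PoszM.
  have [_ _ H1 _] := Hchi.
  move: (chi_per Hchi 1 (j%:Z * A0%:Z)); rewrite H1 => <-; congr chi; ring.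
Qed.


Lemma size_Us g : size [seq u <- iota 0 g | coprime u g] = totient g.
Proof.
rewrite size_filter totient_count_coprime -sum1_count big_mkcond /= /index_iota subn0.
by apply: eq_bigr => i _; rewrite coprime_sym; case: (coprime g i).
Qed.

Lemma sum_Fs (N Ns : nat) :
  sumn [seq totient (gf N f) | f <- [seq f <- iota 0 N.+1 | (f %| N)%N && (gf N f %| N %/ Ns)%N]]
  = (\sum_(f < N.+1 | (f %| N) && (gcdn f (N %/ f) %| N %/ Ns)) totient (gcdn f (N %/ f)))%N.
Proof.
rewrite sumnE big_map big_filter.
have := big_mkord (fun f => (f %| N) && (gf N f %| N %/ Ns))%N (fun f => totient (gf N f)).
by rewrite /index_iota ?subn0 /gf => <-.
Qed.

Unset Implicit Arguments. Set Strict Implicit.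

Theorem corollary5p5 (N : nat) (k : int) (psi : int -> algC) (Nstar : nat)
  (chi : int -> algC) :
  (0 < N)%N ->
  dirichlet_char N psi ->
  psi (-1) = ((-1) ^ k)%R ->
  (Nstar %| N)%N ->
  primitive_char Nstar chi ->
  induced_by N psi Nstar chi ->
  exists s : seq cusp,
    [/\ size s = (\sum_(f < N.+1 | (f %| N) && (gcdn f (N %/ f) %| N %/ Nstar))
                    totient (gcdn f (N %/ f)))%N,
        forall x, x \in s -> singular N psi x,
        forall i j, (i < size s)%N -> (j < size s)%N -> i <> j ->
          ~ cusp_equiv N (nth None s i) (nth None s j) &
        forall x, singular N psi x -> exists2 y, y \in s & cusp_equiv N x y].
Proof.
move=> HN Hpsi _ HNs Hprim Hind.
have Hchi : dirichlet_char Nstar chi by case: Hprim.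
set Fs := [seq f <- iota 0 N.+1 | (f %| N)%N && (gf N f %| N %/ Nstar)%N].
set Us := fun f => [seq u <- iota 0 (gf N f) | coprime u (gf N f)].
set PL := [seq (f, u) | f <- Fs, u <- Us f].
have HPL : forall p, p \in PL -> [/\ (p.1 %| N)%N, (gf N p.1 %| N %/ Nstar)%N,
    (p.2 < gf N p.1)%N & coprime p.2 (gf N p.1)].
  move=> p /allpairsPdep [f [u [Hf Hu ->]]] /=.
  move: Hf Hu; rewrite /Us !mem_filter => /andP [/andP [H1 H2] _] /andP [H4 H3].
  by split => //; move: H3; rewrite mem_iota add0n.
exists (map (fun p => rep N p.1 p.2) PL); split.
- by rewrite size_map size_allpairs_dep -sum_Fs; congr sumn; apply: eq_map => f; rewrite /Us size_Us.
- move=> x /mapP [p Hp ->]; have [H1 H2 H3 H4] := HPL p Hp.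
  exact: (rep_singular HN HNs Hchi Hind H1 H2 H3 H4).
- move=> i j Hi Hj Hij Heq.
  have Hmap : map (inv N) (map (fun p => rep N p.1 p.2) PL) = PL.
    rewrite -map_comp -[RHS]map_id; apply/eq_in_map => p Hp /=.
    have [H1 H2 H3 H4] := HPL p Hp; rewrite inv_rep //; by case: p Hp {H1 H2 H3 H4}.
  have Huniq : uniq PL.
    apply: allpairs_uniq_dep.
    - by rewrite filter_uniq // iota_uniq.
    - by move=> f _; rewrite filter_uniq // iota_uniq.
    - by move=> [f1 u1] [f2 u2] _ _ /= [E1]; move: u1 u2; rewrite E1 => u1 u2 ->.
  have := inv_equiv HN Heq.
  rewrite size_map in Hi Hj.
  rewrite -(nth_map None (0, 0)%N (inv N)) ?size_map // -(nth_map None (0, 0)%N (inv N)) ?size_map //.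
  rewrite Hmap => /eqP; rewrite nth_uniq //.
  by move/eqP.
- move=> x Hx.
  exists (rep N (dC N (vc x)) (inv N x).2); last exact: to_rep.
  apply/mapP; exists (dC N (vc x), (inv N x).2) => //.
  have [Hlt Hcop] := inv_props x HN.
  have HdN : (dC N (vc x) %| N)%N by rewrite /dC dvdn_gcdr.
  apply/allpairsPdep; exists (dC N (vc x)), (inv N x).2; split => //.
  + rewrite mem_filter mem_iota /= HdN ltnS dvdn_leq //=.
    rewrite andbT; exact: (sing_cond HN HNs Hprim Hind Hx).
  + by rewrite /Us mem_filter mem_iota /= Hcop Hlt.
Qed.
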